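(* Let $(G_a,G_b)\sim ER(n;\mathbf{p})$ on vertex set $V$, and assume $\varepsilon\triangleq \frac{p_{01}}{p_{0*}}+\frac{p_{10}}{p_{1*}}<1$. Let $u,v\in V$ with $d_a(u)>d_a(v)$, define $\varphi\triangleq d_a(u)\frac{p_{10}}{p_{1*}}+\bar d_a(v)\frac{p_{01}}{p_{0*}}$, let $k$ be a real number and let $\eta\in(0,\infty)$ (possibly depending on $n$). If \[ d_a(u)-d_a(v)\ \ge\ (1-\varepsilon)^{-1}\Big(k+4\max\big(\eta,\sqrt{\varphi\cdot\eta}\big)\Big), \] then, conditionally on $G_a$, $\Pr[d_b(u)-d_b(v)\le k]\le e^{-\eta}$.
   Context: Correlated Erdős–Rényi model $ER(n;\mathbf{p})$: $G_a$ and $G_b$ are random graphs on the same $n$-vertex set $V$; for each unordered pair $e$ of distinct vertices, independently, $(\mathbf 1[e\in E(G_a)],\mathbf 1[e\in E(G_b)])$ equals $(1,1),(1,0),(0,1),(0,0)$ with probabilities $p_{11},p_{10},p_{01},p_{00}$. Marginals: $p_{1*}=p_{11}+p_{10}$, $p_{0*}=p_{01}+p_{00}$. Notation: $d_a(x)$, $d_b(x)$ are the degrees of $x$ in $G_a$, $G_b$; $\bar d_a(x)=n-1-d_a(x)$ is the complementary degree of $x$ in $G_a$. *)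

(* Defs.v *)
From HB Require Import structures.
From mathcomp Require Import all_boot all_order all_algebra.
From mathcomp Require Import reals sequences exp.
Set Implicit Arguments. Unset Strict Implicit. Unset Printing Implicit Defensive.
Import Order.TTheory GRing.Theory Num.Theory.
Local Open Scope ring_scope.

Definition vpairs (n : nat) : {set {set 'I_n}} := [set e : {set 'I_n} | #|e| == 2%N].

(* A graph on V is a set of edges E \subset vpairs n. Degree of x. *)
Definition deg (n : nat) (E : {set {set 'I_n}}) (x : 'I_n) : nat :=
  #|[set e in E | x \in e]|.

Definition cdeg (n : nat) (E : {set {set 'I_n}}) (x : 'I_n) : nat :=
  (n.-1 - deg E x)%N.

(* Per-pair law: P[(1[e in Ga], 1[e in Gb]) = (a,b)] = p_ab. *)
Definition pab {R : realType} (p11 p10 p01 p00 : R) (a b : bool) : R :=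
  if a then (if b then p11 else p10) else (if b then p01 else p00).

Definition ER_joint {R : realType} (n : nat) (p11 p10 p01 p00 : R)
    (A B : {set {set 'I_n}}) : R :=
  if (A \subset vpairs n) && (B \subset vpairs n) then
    \prod_(e in vpairs n) pab p11 p10 p01 p00 (e \in A) (e \in B)
  else 0.

Definition ER_cond_prob {R : realType} (n : nat) (p11 p10 p01 p00 : R)
    (A : {set {set 'I_n}}) (Ev : pred {set {set 'I_n}}) : R :=
  (\sum_(B | Ev B) ER_joint p11 p10 p01 p00 A B)
  / (\sum_B ER_joint p11 p10 p01 p00 A B).

(* Main.v *)
Require Import Defs.
From HB Require Import structures.
From mathcomp Require Import all_boot all_order all_algebra.
From mathcomp Require Import reals sequences exp.
From mathcomp Require Import ring lra.
Import Order.TTheory GRing.Theory Num.Theory.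
Local Open Scope ring_scope.
Lemma sum_set_prod (R : comNzRingType) (T : finType) (G : T -> bool -> R) :
  \sum_(B : {set T}) \prod_(e : T) G e (e \in B) = \prod_(e : T) (G e true + G e false).
Proof.
transitivity (\prod_(e : T) \sum_(b : bool) G e b).
  rewrite (bigA_distr_bigA G).
  rewrite (reindex (fun f : {ffun T -> bool} => [set e | f e])) /=.
    by apply: eq_bigr => f _; apply: eq_bigr => e _; rewrite inE.
  exists (fun B : {set T} => [ffun e => e \in B]) => f _.
    by apply/ffunP => e; rewrite ffunE inE.
  by apply/setP => e; rewrite inE ffunE.
by apply: eq_bigr => e _; rewrite big_bool.
Qed.

Lemma card_inc (n : nat) (w : 'I_n) : #|[set e in vpairs n | w \in e]| = n.-1.
Proof.
have -> : [set e in vpairs n | w \in e] = [set [set w; z] | z in [set~ w]].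
  apply/setP => e; rewrite !inE; apply/andP/imsetP.
    case=> /cards2P [x [y [xy ->]]]; rewrite !inE => /orP [/eqP->|/eqP->].
      by exists y; rewrite ?inE // eq_sym.
    by exists x; rewrite ?inE // setUC.
  case=> z; rewrite !inE => zw ->; split; last by rewrite !inE eqxx.
  by rewrite cards2 (eq_sym w) zw.
rewrite (@card_in_imset _ _ (fun z => [set w; z])) ?cardsC1 ?card_ord //.
move=> z1 z2; rewrite !inE => z1w z2w E.
have : z1 \in [set w; z2] by rewrite -E !inE eqxx orbT.
by rewrite !inE (negbTE z1w) => /eqP.
Qed.

Lemma sum_ind (R : comNzRingType) (T : finType) (S X : {set T}) :
  X \subset S -> \sum_(e in S) ((e \in X)%:R : R) = #|X|%:R.
Proof.
move=> XS.
transitivity (\sum_(e in S | e \in X) (1 : R)).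
  by rewrite big_mkcondr; apply: eq_bigr => e _; case: (e \in X).
rewrite (eq_bigl (fun e => e \in X)); first by rewrite sumr_const.
by move=> e /=; case eX: (e \in X); rewrite ?andbT ?andbF // (subsetP XS).
Qed.

Lemma sum_count (R : comNzRingType) (n : nat) (A : {set {set 'I_n}})
  (hA : A \subset vpairs n) (w : 'I_n) (f : bool -> R) :
  \sum_(e in vpairs n) (w \in e)%:R * f (e \in A) =
  (deg A w)%:R * f true + (n.-1 - deg A w)%:R * f false.
Proof.
set U := [set e in vpairs n | w \in e].
transitivity (\sum_(e in vpairs n)
   ((e \in U :&: A)%:R * f true + (e \in U :\: A)%:R * f false)).
  apply: eq_bigr => e eS; rewrite in_setI in_setD /U inE eS /=.
  by case: (w \in e); case: (e \in A); rewrite /= ?mul0r ?mul1r ?addr0 ?add0r.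
rewrite big_split /= -!mulr_suml !sum_ind; first last.
- by apply/subsetP => e; rewrite in_setI /U inE => /andP [/andP []].
- by apply/subsetP => e; rewrite in_setD /U inE => /andP [_ /andP []].
have H1 : #|U :&: A| = deg A w.
  rewrite /deg; apply: eq_card => e; rewrite in_setI /U !in_set.
  case eA: (e \in A); rewrite ?andbF ?andbT //.
  by have := subsetP hA e eA; rewrite inE => ->.
have H2 : #|U :\: A| = (n.-1 - deg A w)%N.
  by rewrite -(@card_inc n w) -/U -(cardsID A U) H1 addKn.
by rewrite H1 H2.
Qed.

Lemma mgf (R : realType) (n : nat) (p11 p10 p01 p00 : R) (A : {set {set 'I_n}})
  (hA : A \subset vpairs n) (u v : 'I_n) (l : R) :
  \sum_B ER_joint p11 p10 p01 p00 A B * expR (- l * ((deg B u)%:R - (deg B v)%:R))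
  = \prod_(e in vpairs n) (pab p11 p10 p01 p00 (e \in A) true
        * expR (- l * ((u \in e)%:R - (v \in e)%:R)) + pab p11 p10 p01 p00 (e \in A) false).
Proof.
set S := vpairs n.
pose c (e : {set 'I_n}) : R := ((u \in e)%:R - (v \in e)%:R).
pose G e (b : bool) := if e \in S then pab p11 p10 p01 p00 (e \in A) b * expR (- l * (b%:R * c e))
   else (if b then 0 else 1).
transitivity (\sum_(B : {set {set 'I_n}}) \prod_e G e (e \in B)).
  apply: eq_bigr => B _.
  rewrite /ER_joint hA /=.
  case BS: (B \subset S).
  - have Dd : (deg B u)%:R - (deg B v)%:R = \sum_(e in S) (e \in B)%:R * c e :> R.
      have := @sum_count R n B BS u (fun b => b%:R).
      have := @sum_count R n B BS v (fun b => b%:R).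
      rewrite !mulr1 !mulr0 !addr0 => <- <-.
      rewrite -sumrB; apply: eq_bigr => e _; rewrite /c; ring.
    rewrite Dd mulr_sumr expR_sum -big_split /= big_mkcond.
    apply: eq_bigr => e _; rewrite /G; case eS: (e \in S) => //.
    have -> : (e \in B) = false by apply/negbTE/negP => /(subsetP BS); rewrite eS.
    by [].
  - have [e eB eS] : exists2 e, e \in B & e \notin S.
      by apply/subsetPn; rewrite BS.
    by rewrite mul0r (bigD1 e) //= /G (negbTE eS) eB mul0r.
rewrite sum_set_prod [RHS]big_mkcond; apply: eq_bigr => e _; rewrite /G.
case: (e \in S) => /=; last by rewrite add0r.
by rewrite mul1r mul0r mulr0 expR0 mulr1.
Qed.

Lemma edge_ineq (R : realType) (l q : R) : 0 <= l -> 0 <= q -> q <= 1 ->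
  [/\ (1-q)*expR (-l) + q <= expR (-l + q*(expR l - 1)),
      q*expR (-l) + (1-q) <= expR (q*(expR (-l) - 1)),
      (1-q)*expR l + q <= expR (l + q*(expR (-l) - 1)),
      q*expR l + (1-q) <= expR (q*(expR l - 1)) &
      (0 <= (-l + q*(expR l - 1)) + (l + q*(expR (-l) - 1))
       /\ 0 <= q*(expR (-l) - 1) + q*(expR l - 1))].
Proof.
move=> l0 q0 q1.
set L := expR l; set L' := expR (-l).
have E : L' * L = 1 by rewrite /L' /L -expRD addNr expR0.
have L1 : 1 <= L by have := expR_ge1Dx l; rewrite -/L; lra.
have L'0 : 0 < L' by apply: expR_gt0.
have L'1 : L' <= 1 by rewrite /L' expR_le1; lra.
have g : forall X : R, 1 + X <= expR X by move=> X; apply: expR_ge1Dx.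
split.
- rewrite expRD -/L'.
  have -> : (1-q)*L' + q = L' * (1 + q*(L-1)).
    apply/eqP; rewrite -subr_eq0.
    have -> : (1 - q) * L' + q - L' * (1 + q * (L - 1)) = q*(1 - L'*L) by ring.
    by rewrite E subrr mulr0.
  by rewrite ler_wpM2l // ltW.
- by have := g (q * (L' - 1)); lra.
- rewrite expRD -/L.
  have -> : (1-q)*L + q = L * (1 + q*(L'-1)).
    apply/eqP; rewrite -subr_eq0.
    have -> : (1 - q) * L + q - L * (1 + q * (L' - 1)) = q*(1 - L'*L) by ring.
    by rewrite E subrr mulr0.
  by rewrite ler_wpM2l // ?(le_trans _ L1).
- by have := g (q * (L - 1)); lra.
- have H : 0 <= L + L' - 2.
    have -> : L + L' - 2 = (L - 1) * (1 - L') by rewrite mulrBr mulr1 mulrBl mul1r mulrC E; ring.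
    by apply: mulr_ge0; lra.
  by split; nra.
Qed.

Lemma exp_bounds (R : realType) (l : R) : 0 <= l -> l <= 1/2 ->
  expR l - 1 <= l + 2 * l^+2 /\ expR (-l) - 1 <= - l + l^+2.
Proof.
move=> l0 l1.
set L := expR l; set L' := expR (-l).
have E : L' * L = 1 by rewrite /L' /L -expRD addNr expR0.
have gL : 1 + l <= L by apply: expR_ge1Dx.
have gL' : 1 - l <= L' by rewrite /L' -[1 - l]/(1 + - l); apply: expR_ge1Dx.
have L'0 : 0 < L' by apply: expR_gt0.
have H1 : L * (1 - l) <= 1 by nra.
have H2 : L <= 2 by nra.
have H3 : L' * (1 + l) <= 1 by nra.
split; nra.
Qed.

Lemma final_ineq (R : realType) (a b m q1 q0 k eta : R) :
  0 <= q1 -> 0 <= q0 -> 0 <= b -> b <= a -> a <= m -> 0 < eta ->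
  4*eta <= (a-b)*(1-q1-q0) - k ->
  16*((a*q1 + (m-b)*q0)*eta) <= ((a-b)*(1-q1-q0) - k)^+2 ->
  exists2 l, 0 <= l &
    l*k + (a*(-l + q1*(expR l-1)) + (m-a)*(q0*(expR (-l)-1))
           + b*(l + q1*(expR (-l)-1)) + (m-b)*(q0*(expR l-1))) <= -eta.
Proof.
move=> hq1 hq0 hb hba ham he.
set t := (a-b)*(1-q1-q0) - k; set phi := a*q1 + (m-b)*q0 => ht ht2.
have phi0 : 0 <= phi by rewrite /phi; nra.
have B : forall l, 0 <= l -> l <= 1/2 ->
    l*k + (a*(-l + q1*(expR l-1)) + (m-a)*(q0*(expR (-l)-1))
           + b*(l + q1*(expR (-l)-1)) + (m-b)*(q0*(expR l-1))) <= - l * t + 3 * l^+2 * phi.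
  move=> l l0 l1; have [X Y] := @exp_bounds R l l0 l1.
  set x := expR l - 1 in X *; set y := expR (-l) - 1 in Y *.
  have c1 : 0 <= a * q1 by nra.
  have c2 : 0 <= (m - a) * q0 by nra.
  have c3 : 0 <= b * q1 by nra.
  have c4 : 0 <= (m - b) * q0 by nra.
  have h1 := ler_wpM2l c1 X.
  have h2 := ler_wpM2l c2 Y.
  have h3 := ler_wpM2l c3 Y.
  have h4 := ler_wpM2l c4 X.
  have h5 : 0 <= l^+2 * ((a*q1 + (m-b)*q0) - (b*q1 + (m-a)*q0)) by apply: mulr_ge0; nra.
  rewrite /t /phi; nra.
have [tphi|phit] := lerP t (4 * phi).
- have phip : 0 < phi by lra.
  exists (t / (8 * phi)).
    by apply: divr_ge0; lra.
  set l := t / (8 * phi).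
  have hl : l * phi = t / 8 by rewrite /l; field; lra.
  have l0 : 0 <= l by apply: divr_ge0; lra.
  have l1 : l <= 1/2.
    by rewrite /l ler_pdivrMr; lra.
  apply: le_trans (B l l0 l1) _.
  have : 0 <= phi * (5 * l * t - 8 * eta) by nra.
  rewrite pmulr_rge0 // => H.
  nra.
- exists (1/2); first by lra.
  apply: le_trans (B _ _ _) _; try lra.
Qed.

Lemma pab_ge0 (R : realType) (p11 p10 p01 p00 : R) x y :
  0 <= p11 -> 0 <= p10 -> 0 <= p01 -> 0 <= p00 -> 0 <= pab p11 p10 p01 p00 x y.
Proof. by move=> *; rewrite /pab; case: x; case: y. Qed.

Theorem lemma4p2 (R : realType) (n : nat) (p11 p10 p01 p00 : R)
  (hp11 : 0 <= p11) (hp10 : 0 <= p10) (hp01 : 0 <= p01) (hp00 : 0 <= p00)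
  (hsum : p11 + p10 + p01 + p00 = 1)
  (hp1 : 0 < p11 + p10) (hp0 : 0 < p01 + p00)
  (heps : p01 / (p01 + p00) + p10 / (p11 + p10) < 1)
  (A : {set {set 'I_n}}) (hA : A \subset vpairs n)
  (u v : 'I_n) (huv : (deg A v < deg A u)%N)
  (k eta : R) (heta : 0 < eta) :
  let eps := p01 / (p01 + p00) + p10 / (p11 + p10) in
  let phi := (deg A u)%:R * (p10 / (p11 + p10))
             + (cdeg A v)%:R * (p01 / (p01 + p00)) in
  (deg A u)%:R - (deg A v)%:R >=
    (1 - eps)^-1 * (k + 4 * Num.max eta (Num.sqrt (phi * eta))) ->
  ER_cond_prob p11 p10 p01 p00 A
    (fun B => (deg B u)%:R - (deg B v)%:R <= k) <= expR (- eta).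
Proof.
move=> eps phi Hk.
set q1 := p10 / (p11 + p10); set q0 := p01 / (p01 + p00).
have hq1 : 0 <= q1 by apply: divr_ge0; lra.
have hq0 : 0 <= q0 by apply: divr_ge0; lra.
have hq1' : q1 <= 1 by rewrite /q1 ler_pdivrMr // mul1r; lra.
have hq0' : q0 <= 1 by rewrite /q0 ler_pdivrMr // mul1r; lra.
have hau : (deg A u <= n.-1)%N.
  rewrite -(@card_inc n u) /deg; apply: subset_leq_card; apply/subsetP => e.
  rewrite !inE => /andP [eA ->]; rewrite andbT.
  by have := subsetP hA e eA; rewrite inE.
have hbv : (deg A v <= n.-1)%N by apply: leq_trans (ltnW huv) hau.
set a := deg A u in huv hau phi Hk *; set b := deg A v in huv hbv phi Hk *.
set m : R := (n.-1)%:R.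
have hcd : (cdeg A v)%:R = m - b%:R :> R by rewrite /cdeg natrB.
have Rba : (b%:R : R) <= a%:R by rewrite ler_nat ltnW.
have Ram : (a%:R : R) <= m by rewrite ler_nat.
have Rb0 : (0 : R) <= b%:R by [].
have e1 : 0 < 1 - eps by rewrite /eps; lra.
rewrite ler_pdivrMl // in Hk.
set M := Num.max eta (Num.sqrt (phi * eta)) in Hk.
have phi0 : 0 <= phi by rewrite /phi hcd; apply: addr_ge0; apply: mulr_ge0 => //; lra.
have M1 : eta <= M by rewrite /M le_max lexx.
have M2 : Num.sqrt (phi * eta) <= M by rewrite /M le_max lexx orbT.
have sq : Num.sqrt (phi * eta) ^+ 2 = phi * eta by rewrite sqr_sqrtr //; nra.
have sq0 : 0 <= Num.sqrt (phi * eta) by apply: sqrtr_ge0.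
have ht : 4 * eta <= (a%:R - b%:R) * (1 - q1 - q0) - k by rewrite /eps -/q0 -/q1 in Hk; nra.
have ht2 : 16 * ((a%:R * q1 + (m - b%:R) * q0) * eta) <= ((a%:R - b%:R) * (1 - q1 - q0) - k) ^+ 2.
  have -> : a%:R * q1 + (m - b%:R) * q0 = phi by rewrite /phi hcd.
  rewrite /eps -/q0 -/q1 in Hk; nra.
have [l l0 Hl] := @final_ineq R a%:R b%:R m q1 q0 k eta hq1 hq0 Rb0 Rba Ram heta ht ht2.
apply: le_trans (_ : expR (l * k + (a%:R * (- l + q1 * (expR l - 1)) + (m - a%:R) * (q0 * (expR (- l) - 1))
     + b%:R * (l + q1 * (expR (- l) - 1)) + (m - b%:R) * (q0 * (expR l - 1)))) <= _); last by rewrite ler_expR.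
set S := vpairs n.
pose J B := ER_joint p11 p10 p01 p00 A B.
pose D (B : {set {set 'I_n}}) : R := (deg B u)%:R - (deg B v)%:R.
have J0 : forall B, 0 <= J B.
  move=> B; rewrite /J /ER_joint; case: ifP => _ //.
  by apply: prodr_ge0 => e _; apply: pab_ge0.
pose Ne e := pab p11 p10 p01 p00 (e \in A) true * expR (- l * ((u \in e)%:R - (v \in e)%:R))
             + pab p11 p10 p01 p00 (e \in A) false.
pose Pe e := pab p11 p10 p01 p00 (e \in A) true + pab p11 p10 p01 p00 (e \in A) false.
have Pe0 : forall e, 0 < Pe e by move=> e; rewrite /Pe /pab; case: (e \in A).
have den : \sum_B J B = \prod_(e in S) Pe e.
  transitivity (\sum_B J B * expR (- 0 * D B)).
    by apply: eq_bigr => B _; rewrite oppr0 mul0r expR0 mulr1.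
  rewrite (@mgf R n p11 p10 p01 p00 A hA u v 0).
  by apply: eq_bigr => e _; rewrite oppr0 mul0r expR0 mulr1.
have num : \sum_(B | D B <= k) J B <= expR (l * k) * \prod_(e in S) Ne e.
  rewrite -(@mgf R n p11 p10 p01 p00 A hA u v l) mulr_sumr.
  rewrite big_mkcond /=; apply: ler_sum => B _.
  rewrite -/(D B) mulrCA -expRD.
  case: ifP => H.
  - rewrite -{1}[J B]mulr1; apply: ler_wpM2l => //.
    have := expR_ge1Dx (l * k + - l * D B); nra.
  - by apply: mulr_ge0 => //; apply: expR_ge0.
rewrite /ER_cond_prob -/J den.
apply: le_trans (_ : expR (l * k) * \prod_(e in S) Ne e / \prod_(e in S) Pe e <= _).
  apply: ler_wpM2r; last exact: num.
  by rewrite invr_ge0; apply: prodr_ge0 => e _; apply: ltW.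
rewrite -mulrA -prodf_div expRD.
apply: ler_wpM2l; first exact: expR_ge0.
pose al (x : bool) := if x then - l + q1 * (expR l - 1) else q0 * (expR (- l) - 1).
pose be (x : bool) := if x then l + q1 * (expR (- l) - 1) else q0 * (expR l - 1).
have Hsum : \sum_(e in S) ((u \in e)%:R * al (e \in A) + (v \in e)%:R * be (e \in A)) =
   a%:R * (- l + q1 * (expR l - 1)) + (m - a%:R) * (q0 * (expR (- l) - 1))
     + b%:R * (l + q1 * (expR (- l) - 1)) + (m - b%:R) * (q0 * (expR l - 1)).
  rewrite big_split /= !sum_count // /al /be -/a -/b !natrB //; rewrite /m; ring.
rewrite -Hsum expR_sum; apply: ler_prod => e _.
have [E1 E2 E3 E4 [E5 E6]] := @edge_ineq R l q1 l0 hq1 hq1'.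
have [F1 F2 F3 F4 [F5 F6]] := @edge_ineq R l q0 l0 hq0 hq0'.
apply/andP; split.
  apply: divr_ge0; last exact: ltW.
  rewrite /Ne; apply: addr_ge0; last exact: pab_ge0.
  by apply: mulr_ge0; [exact: pab_ge0 | exact: expR_ge0].
have T1 : forall E, (p11 * E + p10) / (p11 + p10) = (1 - q1) * E + q1.
  by move=> E; rewrite /q1; field; lra.
have T0 : forall E, (p01 * E + p00) / (p01 + p00) = q0 * E + (1 - q0).
  by move=> E; rewrite /q0; field; lra.
rewrite /Ne /Pe /al /be.
case: (e \in A); rewrite /pab ?T1 ?T0;
  case: (u \in e); case: (v \in e); rewrite /= ?mulr1n ?mulr0n ?subr0 ?sub0r ?subrr ?mulr1 ?mulrN1 ?mulr0 ?opprK ?expR0 ?mul1r ?mul0r ?addr0 ?add0r.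
- have -> : (1 - q1) * 1 + q1 = 1 by ring.
  by apply: le_trans (expR_ge1Dx _); rewrite lerDl.
- exact: E1.
- exact: E3.
- have -> : (1 - q1) * 1 + q1 = 1 by ring.
  by rewrite expR0.
- have -> : q0 * 1 + (1 - q0) = 1 by ring.
  by apply: le_trans (expR_ge1Dx _); rewrite lerDl.
- exact: F2.
- exact: F4.
- have -> : q0 * 1 + (1 - q0) = 1 by ring.
  by rewrite expR0.
Qed.
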